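(* Let $n\equiv 1 \pmod 4$ with $n\ge 5$, and suppose there exists a reverse Gray code for the permutations of $\{1,\ldots,n-1\}$ with property $P$. Then there exists a reverse Gray code for the permutations of $\{1,\ldots,n\}$.
   Context: A reverse Gray code for the permutations of $\{1,\ldots,m\}$ is a listing $\pi_0,\ldots,\pi_{m!-1}$ of all permutations of $\{1,\ldots,m\}$ written as words, such that consecutive permutations differ by interchanging the symbols in two adjacent positions, and $\pi_{i+m!/2}$ is the reversal of $\pi_i$ (the word read backwards) for all $0\le i<m!/2$. Such a code has property $P$ if $\pi_0=12\cdots m$ and the four permutations immediately preceding $\pi_{m!/2}$ are, in order, $(m-1)(m-2)(m-3)\,m\,(m-4)\cdots 3\,1\,2$, then $(m-1)(m-2)\,m\,(m-3)(m-4)\cdots 3\,1\,2$, then $(m-1)\,m\,(m-2)(m-3)(m-4)\cdots 3\,1\,2$, then $m(m-1)(m-2)(m-3)(m-4)\cdots 3\,1\,2$. *)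

(* Defs.v *)
From mathcomp Require Import all_boot.
Set Implicit Arguments. Unset Strict Implicit. Unset Printing Implicit Defensive.

Definition swap_adj (i : nat) (s : seq nat) : seq nat :=
  set_nth 0 (set_nth 0 s i (nth 0 s i.+1)) i.+1 (nth 0 s i).

Definition adj_transp (s t : seq nat) : Prop :=
  exists i, i.+1 < size s /\ t = swap_adj i s.

Definition is_perm_word (m : nat) (s : seq nat) : bool := perm_eq s (iota 1 m).

Definition reverse_gray_code (m : nat) (L : seq (seq nat)) : Prop :=
  [/\ size L = m`!, uniq L, all (is_perm_word m) L,
      (forall i, i.+1 < size L -> adj_transp (nth [::] L i) (nth [::] L i.+1)) &
      (forall i, i < m`! %/ 2 ->
         nth [::] L (i + m`! %/ 2) = rev (nth [::] L i))].

Definition tailP (m : nat) : seq nat := rev (iota 3 (m - 6)) ++ [:: 1; 2].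

Definition wP1 m := [:: m.-1; m - 2; m - 3; m] ++ tailP m.
Definition wP2 m := [:: m.-1; m - 2; m; m - 3] ++ tailP m.
Definition wP3 m := [:: m.-1; m; m - 2; m - 3] ++ tailP m.
Definition wP4 m := [:: m; m.-1; m - 2; m - 3] ++ tailP m.

Definition propertyP (m : nat) (L : seq (seq nat)) : Prop :=
  [/\ nth [::] L 0 = iota 1 m,
      nth [::] L (m`! %/ 2 - 4) = wP1 m,
      nth [::] L (m`! %/ 2 - 3) = wP2 m,
      nth [::] L (m`! %/ 2 - 2) = wP3 m &
      nth [::] L (m`! %/ 2 - 1) = wP4 m].

(* Main.v *)
Require Import Defs.
From mathcomp Require Import all_boot zify.

Definition ins (a k : nat) (p : seq nat) := take k p ++ a :: drop k p.

Lemma swap_adj_cons i x s : swap_adj i.+1 (x :: s) = x :: swap_adj i s.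
Proof. by []. Qed.

Lemma swap_adj_cat l u v r : swap_adj (size l) (l ++ u :: v :: r) = l ++ v :: u :: r.
Proof. by elim: l => [|x l IH] //=; rewrite swap_adj_cons IH. Qed.

Lemma split_at i (s : seq nat) : i.+1 < size s ->
  exists l u v r, s = l ++ u :: v :: r /\ size l = i.
Proof.
move=> H; exists (take i s), (nth 0 s i), (nth 0 s i.+1), (drop i.+2 s); split.
  rewrite -{1}(cat_take_drop i s); congr (_ ++ _).
  rewrite (drop_nth 0) ?(drop_nth 0 (n:=i.+1)) //; lia.
rewrite size_take; case: ifP => //; lia.
Qed.

Lemma size_swap i s : i.+1 < size s -> size (swap_adj i s) = size s.
Proof.
move=> /split_at [l [u [v [r [-> <-]]]]]; rewrite swap_adj_cat !size_cat //.
Qed.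

Lemma swapK i s : i.+1 < size s -> swap_adj i (swap_adj i s) = s.
Proof.
move=> /split_at [l [u [v [r [-> <-]]]]]; by rewrite !swap_adj_cat.
Qed.

Lemma rev_swap i s : i.+1 < size s ->
  rev (swap_adj i s) = swap_adj (size s - i.+2) (rev s).
Proof.
move=> /split_at [l [u [v [r [-> <-]]]]]; rewrite swap_adj_cat.
have -> : size (l ++ [:: u, v & r]) - (size l).+2 = size (rev r) by rewrite size_cat /= size_rev; lia.
rewrite !rev_cat !rev_cons -!cats1 -!catA /=.
by rewrite swap_adj_cat.
Qed.

Lemma adj_sym s t : adj_transp s t -> adj_transp t s.
Proof.
move=> [i [Hi ->]]; exists i; rewrite size_swap // swapK //.
Qed.

Lemma adj_rev s t : adj_transp s t -> adj_transp (rev s) (rev t).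
Proof.
move=> [i [Hi ->]]; exists (size s - i.+2); rewrite size_rev rev_swap //; split => //; lia.
Qed.

Lemma ins_cons a k x p : ins a k.+1 (x :: p) = x :: ins a k p.
Proof. by []. Qed.

Lemma size_ins a k p : size (ins a k p) = (size p).+1.
Proof. rewrite /ins size_cat /= size_take size_drop; case: ifP; lia. Qed.

Lemma ins_succ a k p : k < size p -> ins a k.+1 p = swap_adj k (ins a k p).
Proof.
elim: p k => [|x p IH] k H; first by [].
case: k H => [|k] H.
  by rewrite /ins /= take0 drop0.
by rewrite ins_cons ins_cons swap_adj_cons IH.
Qed.

Lemma ins_swap_lo a k i p : k <= i -> i.+1 < size p ->
  ins a k (swap_adj i p) = swap_adj i.+1 (ins a k p).
Proof.
elim: k i p => [|k IH] i p Hk Hi; first by rewrite /ins !take0 !drop0.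
case: p Hi => [|x p] //; case: i Hk => [|i] // Hk Hi.
by rewrite swap_adj_cons ins_cons IH.
Qed.

Lemma ins_swap_hi a k i p : i.+2 <= k -> k <= size p ->
  ins a k (swap_adj i p) = swap_adj i (ins a k p).
Proof.
elim: i k p => [|i IH] k p Hk Hi.
  case: p Hi => [|x [|y p]] //=; case: k Hk => [|[|k]] //.
case: p Hi => [|x p] //; case: k Hk => [|k] // Hk Hi.
by rewrite swap_adj_cons ins_cons IH.
Qed.

Lemma rev_ins a k p : k <= size p -> rev (ins a k p) = ins a (size p - k) (rev p).
Proof.
move=> H; rewrite /ins rev_cat rev_cons -cats1 -catA /=.
rewrite take_rev drop_rev.
by have -> : size p - (size p - k) = k by lia.
Qed.

Lemma ins_perm m k p : is_perm_word m p -> is_perm_word m.+1 (ins m.+1 k p).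
Proof.
rewrite /is_perm_word /ins => H.
apply: (@perm_trans _ (m.+1 :: p)).
  by rewrite -cat1s perm_catCA cat_take_drop.
rewrite -addn1 iotaD /= perm_sym perm_catC /= [1 + m]addnC perm_cons perm_sym //.
Qed.

Lemma ins_inj m k k' p p' : is_perm_word m p -> is_perm_word m p' -> k <= m -> k' <= m ->
  ins m.+1 k p = ins m.+1 k' p' -> k = k' /\ p = p'.
Proof.
move=> Hp Hp' Hk Hk' E.
have sp : size p = m by rewrite (perm_size Hp) size_iota.
have sp' : size p' = m by rewrite (perm_size Hp') size_iota.
have nin : forall q, is_perm_word m q -> m.+1 \notin q.
  by move=> q Hq; rewrite (perm_mem Hq) mem_iota; lia.
have idx : forall q j, is_perm_word m q -> j <= m -> index m.+1 (ins m.+1 j q) = j.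
  move=> q j Hq Hj; rewrite /ins index_cat.
  have -> : (m.+1 \in take j q) = false by apply/negbTE; apply: contra (nin q Hq); apply: mem_take.
  rewrite /= eqxx addn0 size_take (perm_size Hq) size_iota; case: ifP; lia.
have kk : k = k' by rewrite -(idx p k) // E idx.
subst k'; split => //.
have rec : forall q, size q = m -> q = take k (ins m.+1 k q) ++ drop k.+1 (ins m.+1 k q).
  move=> q Hq; have sk : size (take k q) = k by rewrite size_take Hq; case: ifP; lia.
  rewrite /ins drop_cat sk ltnNge leqnSn /= subSnn /= drop0 (take_size_cat _ sk).
  by rewrite cat_take_drop.
by rewrite (rec p sp) (rec p' sp') E.
Qed.

Section Gen.
Variable T : eqType.

Lemma last_ne (x y : T) s : s != [::] -> last x s = last y s.
Proof. by case: s. Qed.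

Lemma sorted_cat2 (e : rel T) x0 s1 s2 : sorted e s1 -> sorted e s2 ->
  s1 != [::] -> s2 != [::] -> e (last x0 s1) (head x0 s2) -> sorted e (s1 ++ s2).
Proof.
case: s1 => [|x s1] //; case: s2 => [|y s2] //= H1 H2 _ _ H.
by rewrite cat_path H1 /= H H2.
Qed.

Lemma sorted_flatten (e : rel T) x0 (F : nat -> seq T) r a :
  (forall j, a <= j < a + r -> sorted e (F j) && (F j != [::])) ->
  (forall j, a <= j -> j.+1 < a + r -> e (last x0 (F j)) (head x0 (F j.+1))) ->
  sorted e (flatten (map F (iota a r))).
Proof.
elim: r a => [|r IH] a H1 H2 //=.
case: r IH H1 H2 => [|r] IH H1 H2.
  by rewrite /= cats0; case/andP: (H1 a ltac:(lia)).
case/andP: (H1 a ltac:(lia)) => Sa Na.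
case/andP: (H1 a.+1 ltac:(lia)) => Sb Nb.
apply: (@sorted_cat2 e x0) => //.
- apply: IH => [j Hj|j Hj1 Hj2]; [apply: H1|apply: H2]; lia.
- by rewrite /=; case: (F a.+1) Nb.
- have := H2 a (leqnn _) ltac:(lia).
  by rewrite /=; case: (F a.+1) Nb.
Qed.

Lemma last_flatten x0 (F : nat -> seq T) r a : 0 < r ->
  (forall j, a <= j < a + r -> F j != [::]) ->
  last x0 (flatten (map F (iota a r))) = last x0 (F (a + r.-1)).
Proof.
elim: r a => [|r IH] a // _ H /=.
case: r IH H => [|r] IH H; first by rewrite cats0 addn0.
rewrite last_cat (last_ne _ x0); last first.
  by rewrite /=; have := H a.+1 ltac:(lia); case: (F a.+1).
rewrite IH //; last by move=> j Hj; apply: H; lia.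
by rewrite addSnnS.
Qed.

Lemma all_flatten_iota (p : pred T) (F : nat -> seq T) r a :
  (forall j, a <= j < a + r -> all p (F j)) -> all p (flatten (map F (iota a r))).
Proof.
elim: r a => [|r IH] a H //=.
rewrite all_cat H; last lia.
by rewrite IH // => j Hj; apply: H; lia.
Qed.

Lemma size_flatten_iota (F : nat -> seq T) c r a :
  (forall j, a <= j < a + r -> size (F j) = c) -> size (flatten (map F (iota a r))) = r * c.
Proof.
elim: r a => [|r IH] a H //=.
rewrite size_cat H; last lia.
rewrite (IH a.+1); last by move=> j Hj; apply: H; lia.
by rewrite mulSn.
Qed.

Lemma disj_has (p q : pred T) s1 s2 : all p s1 -> all q s2 ->
  (forall x, p x -> q x -> False) -> ~~ has (mem s1) s2.
Proof.
move=> /allP A1 /allP A2 D; apply/hasPn => x Hx; apply/negP => Hx1.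
exact: (D x (A1 x Hx1) (A2 x Hx)).
Qed.

Lemma uniq_flatten_key (g : T -> nat) (F : nat -> seq T) r a :
  (forall j, a <= j < a + r -> uniq (F j) && all (fun x => g x == j) (F j)) ->
  uniq (flatten (map F (iota a r))).
Proof.
elim: r a => [|r IH] a H //=.
case/andP: (H a ltac:(lia)) => U A.
rewrite cat_uniq U IH /=; last by move=> j Hj; apply: H; lia.
rewrite (@disj_has (fun x => g x == a) (fun x => a < g x)) //.
  apply: all_flatten_iota => j Hj.
  case/andP: (H j ltac:(lia)) => _ /allP Aj; apply/allP => x /Aj; lia.
by move=> x; lia.
Qed.

Lemma sorted_iota (e : rel nat) r a :
  (forall k, a <= k -> k.+1 < a + r -> e k k.+1) -> sorted e (iota a r).
Proof.
elim: r a => [|r IH] a H //=.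
case: r IH H => [|r] IH H //=.
rewrite H ?leqnn //; last lia.
have := IH a.+1; rewrite /=; apply => k Hk1 Hk2; apply: H; lia.
Qed.
End Gen.

Definition blkK m i := if odd i then iota 0 m.+1 else rev (iota 0 m.+1).
Definition blk m i := [seq (i, k) | k <- blkK m i].
Definition gen m B := flatten [seq blk m i | i <- iota 0 B].
Definition colc t := if odd t then [:: 3;2;1;0] else [:: 0;1;2;3].
Definition colb m B t := [seq (B + c, m - t) | c <- colc t].
Definition col m B := flatten [seq colb m B t | t <- iota 0 (m-4)].
Definition small : seq (nat * nat) :=
  [:: (0, 4); (0, 3); (0, 2); (0, 1); (0, 0); (1, 0); (2, 0); (2, 1); (1, 1); (1, 2);
      (1, 3); (1, 4); (2, 4); (3, 4); (3, 3); (2, 3); (2, 2); (3, 2); (3, 1); (3, 0)].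
Definition sm B := [seq (B + x.1, x.2) | x <- small].
Definition PP m B := gen m B ++ col m B ++ sm B.

Definition stepb (m B : nat) (x y : nat * nat) : bool :=
  let: (i, k) := x in let: (i', k') := y in
  [|| (i == i') && ((k' == k.+1) && (k' <= m) || (k == k'.+1) && (k <= m)),
      (k == k') && ((k == 0) || (k == m)) && ((i' == i.+1) || (i == i'.+1)),
      (k == k') && (k <= m) && (i' == i.+1) && (B <= i) && (i < B + 3) && (k + (i - B) != 3)
    | (k == k') && (k <= m) && (i == i'.+1) && (B <= i') && (i' < B + 3) && (k + (i' - B) != 3)].

Lemma iotaS0 m : iota 0 m.+1 = iota 0 m ++ [:: m].
Proof. by rewrite -addn1 iotaD. Qed.

Lemma blk_sorted m B i : sorted (stepb m B) (blk m i).
Proof.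
rewrite /blk sorted_map /blkK; case: ifP => _.
  by apply: sorted_iota => k _ Hk /=; lia.
by rewrite rev_sorted; apply: sorted_iota => k _ Hk /=; lia.
Qed.

Lemma blk_last m i x0 : last x0 (blk m i) = (i, if odd i then m else 0).
Proof.
rewrite /blk /blkK; case: ifP => _.
  by rewrite iotaS0 map_cat last_cat.
by rewrite /= rev_cons map_rcons last_rcons.
Qed.

Lemma blk_head m i x0 : head x0 (blk m i) = (i, if odd i then 0 else m).
Proof.
rewrite /blk /blkK; case: ifP => _ //.
by rewrite iotaS0 rev_cat.
Qed.

Lemma blk_ne m i : blk m i != [::].
Proof. by rewrite /blk /blkK; case: ifP => //; rewrite /= rev_cons; case: rev. Qed.

Lemma size_blk m i : size (blk m i) = m.+1.
Proof. by rewrite /blk /blkK size_map; case: ifP; rewrite ?size_rev size_iota. Qed.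

Lemma colb_sorted m B t : t + 4 <= m -> sorted (stepb m B) (colb m B t).
Proof. by move=> H; rewrite /colb /colc; case: ifP => _ /=; lia. Qed.

Lemma sm_sorted m B : 4 <= m -> sorted (stepb m B) (sm B).
Proof. by move=> H; rewrite /sm /=; lia. Qed.

Section PPfacts.
Variables m B : nat.
Hypothesis Hm : 8 <= m.
Hypothesis Hmo : ~~ odd m.
Hypothesis HB : 2 <= B.
Hypothesis HBo : ~~ odd B.

Lemma gen_sorted : sorted (stepb m B) (gen m B).
Proof.
apply: (sorted_flatten _ _ (0,0)) => [j Hj|j _ Hj].
  by rewrite blk_sorted blk_ne.
rewrite blk_last blk_head /=; case: (odd j) => /=; lia.
Qed.

Lemma colb_ne t : colb m B t != [::].
Proof. by rewrite /colb /colc; case: ifP. Qed.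

Lemma col_sorted : sorted (stepb m B) (col m B).
Proof.
apply: (sorted_flatten _ _ (0,0)) => [j Hj|j _ Hj].
  rewrite colb_sorted ?colb_ne //; lia.
rewrite /colb /colc /=; case: (odd j) => /=; lia.
Qed.

Lemma gen_last x0 : last x0 (gen m B) = (B.-1, m).
Proof.
rewrite /gen last_flatten; first last.
- by move=> j _; apply: blk_ne.
- lia.
rewrite blk_last add0n; case: ifP => //; lia.
Qed.

Lemma col_last x0 : last x0 (col m B) = (B, 5).
Proof.
rewrite /col last_flatten; first last.
- by move=> j _; apply: colb_ne.
- lia.
rewrite /colb /colc add0n.
have -> : odd (m - 4).-1 by lia.
rewrite /= addn0; congr pair; lia.
Qed.

Lemma col_head x0 : head x0 (col m B ++ sm B) = (B, m).
Proof.
rewrite /col; have -> : m - 4 = (m - 5).+1 by lia.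
by rewrite /= /colb /colc /= addn0 subn0.
Qed.

Lemma PP_sorted : sorted (stepb m B) (PP m B).
Proof.
have N1 : col m B != [::].
  rewrite /col; have -> : m - 4 = (m - 5).+1 by lia.
  by rewrite /= /colb /colc.
apply: (sorted_cat2 _ _ (0,0)).
- exact gen_sorted.
- apply: (sorted_cat2 _ _ (0,0)) => //.
  + exact col_sorted.
  + apply: sm_sorted; lia.
  + by rewrite col_last /=; lia.
- rewrite /gen; case: B HB => [|B'] // _ /=.
  by have := blk_ne m 0; case: (blk m 0).
- by case: (col m B) N1.
- rewrite gen_last col_head /=; lia.
Qed.

Lemma size_PP : size (PP m B) = (B + 4) * m.+1.
Proof.
rewrite /PP !size_cat /gen /col (size_flatten_iota _ _ m.+1); last by move=> j _; apply: size_blk.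
rewrite (size_flatten_iota _ _ 4); last by move=> j _; rewrite /colb /colc; case: ifP.
rewrite /sm size_map /=; lia.
Qed.

Lemma PP_range : all (fun x => (x.1 < B + 4) && (x.2 <= m)) (PP m B).
Proof.
rewrite /PP !all_cat; apply/and3P; split.
- apply: all_flatten_iota => j Hj; rewrite /blk all_map; apply/allP => k /=.
  rewrite /blkK; case: ifP => _; rewrite ?mem_rev mem_iota; lia.
- apply: all_flatten_iota => j Hj; rewrite /colb /colc; case: ifP => _ /=; lia.
- rewrite /sm /=; lia.
Qed.

Lemma PP_uniq : uniq (PP m B).
Proof.
have Ag : all (fun x => x.1 < B) (gen m B).
  apply: all_flatten_iota => j Hj; rewrite /blk all_map; apply/allP => k /= _; lia.
have Ac : all (fun x => (B <= x.1) && (5 <= x.2)) (col m B).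
  apply: all_flatten_iota => j Hj; rewrite /colb /colc; case: ifP => _ /=; lia.
have As : all (fun x => (B <= x.1) && (x.2 <= 4)) (sm B).
  rewrite /sm /=; lia.
rewrite /PP cat_uniq; apply/and3P; split.
- apply: (uniq_flatten_key _ fst) => j Hj.
  rewrite /blk map_inj_uniq; last by move=> x y [].
  rewrite /blkK; apply/andP; split; first by case: ifP; rewrite ?rev_uniq iota_uniq.
  by rewrite all_map; apply/allP => k _ /=.
- apply: (disj_has _ _ (fun x => B <= x.1) _ _ Ag); last by move=> x /=; lia.
  rewrite all_cat; apply/andP; split; [apply: sub_all Ac|apply: sub_all As] => x /andP[]//.
rewrite cat_uniq; apply/and3P; split.
- apply: (uniq_flatten_key _ (fun x => m - x.2)) => j Hj.
  rewrite /colb map_inj_uniq; last by move=> x y [/addnI].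
  rewrite /colc; case: ifP => _ /=; lia.
- apply: (disj_has _ _ _ _ _ Ac As); move=> x /=; lia.
rewrite /sm map_inj_uniq //.
by move=> [a b] [c d] /= [/addnI -> ->].
Qed.

Lemma PP_head : exists rest, PP m B = (0, m) :: rest.
Proof.
rewrite /PP /gen; case: B HB => [|B'] // _; rewrite /= /blk /blkK /=.
rewrite -/(iota 0 m.+1) iotaS0 rev_cat /=.
by eexists.
Qed.

Lemma PP_last x0 : last x0 (PP m B) = (B + 3, 0).
Proof. by rewrite /PP !last_cat /sm. Qed.

End PPfacts.

Section Main.
Variables (m : nat) (L : seq (seq nat)).
Hypothesis HR : reverse_gray_code m L.
Hypothesis HP : propertyP m L.
Hypothesis Hm : 8 <= m.
Hypothesis Hmo : ~~ odd m.

Definition f (x : nat * nat) := ins m.+1 x.2 (nth [::] L x.1).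

Lemma sizeL : size L = m`!.
Proof. by case: HR. Qed.

Lemma hfacts : m`! = 2 * (m`! %/ 2) /\ ~~ odd (m`! %/ 2) /\ 6 <= m`! %/ 2.
Proof.
have d4 : 4 %| m`! by apply: dvdn_fact; lia.
have g : 4`! <= m`! by apply: leq_fact; lia.
have e : 4`! = 24 by [].
rewrite e in g; lia.
Qed.

Lemma permL i : i < m`! -> is_perm_word m (nth [::] L i).
Proof.
case: HR => S _ A _ _ Hi; apply: (allP A); apply: mem_nth; by rewrite S.
Qed.

Lemma sizeLi i : i < m`! -> size (nth [::] L i) = m.
Proof. by move/permL => P; rewrite (perm_size P) size_iota. Qed.

Lemma adjI i k : i.+1 < m`! -> (k == 0) || (k == m) -> adj_transp (f (i, k)) (f (i.+1, k)).
Proof.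
move=> Hi Hk; case: HR => S _ _ G _.
have [j [Hj E]] := G i ltac:(rewrite S; lia).
have sz := sizeLi i ltac:(lia).
rewrite /f /= E.
case/orP: Hk => /eqP ->.
  rewrite ins_swap_lo //; exists j.+1; split => //; rewrite size_ins; lia.
rewrite ins_swap_hi; first (exists j; split => //; rewrite size_ins; lia); lia.
Qed.

Let h := m`! %/ 2.
Let Bv := h - 4.

Lemma wsw c : c < 3 -> nth [::] L (Bv + c).+1 = swap_adj (2 - c) (nth [::] L (Bv + c)).
Proof.
have [_ [_ H6]] := hfacts.
case: HP => _ E1 E2 E3 E4.
case: c => [|[|[|c]]] // _.
- have -> : (Bv + 0).+1 = m`! %/ 2 - 3 by rewrite /Bv /h; lia.
  have -> : Bv + 0 = m`! %/ 2 - 4 by rewrite /Bv /h; lia.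
  by rewrite E1 E2.
- have -> : (Bv + 1).+1 = m`! %/ 2 - 2 by rewrite /Bv /h; lia.
  have -> : Bv + 1 = m`! %/ 2 - 3 by rewrite /Bv /h; lia.
  by rewrite E2 E3.
- have -> : (Bv + 2).+1 = m`! %/ 2 - 1 by rewrite /Bv /h; lia.
  have -> : Bv + 2 = m`! %/ 2 - 2 by rewrite /Bv /h; lia.
  by rewrite E3 E4.
Qed.

Lemma step_adj x y : x.1 < Bv + 4 -> y.1 < Bv + 4 -> x.2 <= m -> y.2 <= m ->
  stepb m Bv x y -> adj_transp (f x) (f y).
Proof.
have [H1 [_ H6]] := hfacts.
case: x => i k; case: y => i' k' /= Hi Hi' Hk Hk'.
have szi := sizeLi i ltac:(rewrite /Bv /h in Hi; lia).
have szi' := sizeLi i' ltac:(rewrite /Bv /h in Hi'; lia).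
case/or4P.
- case/andP => /eqP <- /orP [] /andP [/eqP -> Hle].
    rewrite /f /= ins_succ; last lia.
    exists k; split => //; rewrite size_ins; lia.
  apply: adj_sym; rewrite /f /= ins_succ; last lia.
  exists k'; split => //; rewrite size_ins; lia.
- case/andP => /andP [/eqP <- Hk0] /orP [] /eqP ->.
    apply: adjI => //; rewrite /Bv /h in Hi'; lia.
  apply: adj_sym; apply: adjI => //; rewrite /Bv /h in Hi; lia.
- move=> /andP [/andP [/andP [/andP [/andP [/eqP <- _] /eqP ->] HB1] HB2] Hne].
  have -> : i = Bv + (i - Bv) by lia.
  rewrite /f /= wsw; last lia.
  have sz2 := sizeLi (Bv + (i - Bv)) ltac:(rewrite /Bv /h in Hi; lia).
  case: (leqP k (2 - (i - Bv))) => Hc.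
    rewrite ins_swap_lo //; last lia.
    exists (2 - (i - Bv)).+1; split; [rewrite size_ins; lia|by []].
  rewrite ins_swap_hi //; try lia.
  exists (2 - (i - Bv)); split; [rewrite size_ins; lia|by []].
- move=> /andP [/andP [/andP [/andP [/andP [/eqP <- _] /eqP ->] HB1] HB2] Hne].
  apply: adj_sym.
  have -> : i' = Bv + (i' - Bv) by lia.
  rewrite /f /= wsw; last lia.
  have sz2 := sizeLi (Bv + (i' - Bv)) ltac:(rewrite /Bv /h in Hi'; lia).
  case: (leqP k (2 - (i' - Bv))) => Hc.
    rewrite ins_swap_lo //; last lia.
    exists (2 - (i' - Bv)).+1; split; [rewrite size_ins; lia|by []].
  rewrite ins_swap_hi //; try lia.
  exists (2 - (i' - Bv)); split; [rewrite size_ins; lia|by []].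
Qed.


Lemma main_exists : exists S, reverse_gray_code m.+1 S.
Proof.
have [HN [Hho H6]] := hfacts.
have HBo : ~~ odd Bv by rewrite /Bv /h; lia.
have HB : 2 <= Bv by rewrite /Bv /h; lia.
have HBh : Bv + 4 = h by rewrite /Bv /h; lia.
case: (HR) => SL UL AL GL RL.
set P := PP m Bv.
have sP : size P = h * m.+1 by rewrite (size_PP m Bv Hm Hmo HB HBo) HBh.
have inr : forall x, x \in P -> x.1 < Bv + 4 /\ x.2 <= m.
  move=> x Hx; by case/andP: (allP (PP_range m Bv Hm Hmo HB HBo) x Hx).
set H := map f P.
have sH : size H = h * m.+1 by rewrite size_map.
have Hadj : forall j, j.+1 < size H -> adj_transp (nth [::] H j) (nth [::] H j.+1).
  move=> j Hj; rewrite size_map in Hj; rewrite !(nth_map (0,0)) //; last lia.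
  have [Ra Rb] := inr _ (mem_nth (0,0) (ltnW Hj)).
  have [Rc Rd] := inr _ (mem_nth (0,0) Hj).
  apply: step_adj => //.
  exact: (sortedP (0,0) (PP_sorted m Bv Hm Hmo HB HBo)).
have finj : {in P &, injective f}.
  move=> [i k] [i' k'] Hx Hy E.
  have [Ra Rb] := inr _ Hx; have [Rc Rd] := inr _ Hy; simpl in *.
  have [Ek Ep] := ins_inj _ _ _ _ _ (permL i ltac:(lia)) (permL i' ltac:(lia)) Rb Rd E.
  have : nth [::] L i == nth [::] L i' by rewrite Ep.
  rewrite nth_uniq ?SL //; [by move/eqP => ->; rewrite Ek|lia|lia].
have revf : forall x, x \in P -> rev (f x) = ins m.+1 (m - x.2) (nth [::] L (x.1 + h)).
  move=> [i k] Hx; have [Ra Rb] := inr _ Hx; simpl in *.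
  rewrite /f /= rev_ins sizeLi //; try lia.
  rewrite RL //; lia.
exists (H ++ map rev H); split.
- rewrite size_cat size_map sH factS; lia.
- rewrite cat_uniq; apply/and3P; split.
  + by rewrite map_inj_in_uniq // (PP_uniq m Bv Hm Hmo HB HBo).
  + apply/hasPn => z /mapP [y /mapP [x Hx ->] ->]; apply/negP => /mapP [x' Hx' E].
    rewrite revf // in E.
    have [Ra Rb] := inr _ Hx; have [Rc Rd] := inr _ Hx'.
    have [_ Ep] := ins_inj _ (m - x.2) x'.2 _ _ (permL (x.1 + h) ltac:(lia)) (permL x'.1 ltac:(lia)) (leq_subr _ _) Rd E.
    have : nth [::] L (x.1 + h) == nth [::] L x'.1 by rewrite Ep.
    rewrite nth_uniq ?SL //; lia.
  + rewrite map_inj_uniq; last exact: (can_inj (@revK _)).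
    by rewrite map_inj_in_uniq // (PP_uniq m Bv Hm Hmo HB HBo).
- rewrite all_cat !all_map; apply/andP; split; apply/allP => [[i k]] Hx /=;
    have [/= Ra Rb] := inr _ Hx.
  + by rewrite /f; apply: ins_perm; apply: permL => /=; lia.
  + by rewrite /is_perm_word perm_rev /f; apply: ins_perm; apply: permL => /=; lia.
- move=> j; rewrite size_cat size_map => Hj.
  case: (ltnP j.+1 (size H)) => H1.
    by rewrite !nth_cat H1 (ltnW H1); apply: Hadj.
  case: (ltnP j (size H)) => H2.
    have Ej2 : j.+1 = size H by lia.
    have Ej : j = (size P).-1 by rewrite size_map in Ej2; lia.
    rewrite nth_cat H2 Ej2 nth_cat ltnn subnn.
    have [rest Pe] := PP_head m Bv HB.
    rewrite (nth_map [::]); last by rewrite sH; lia.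
    rewrite /H (nth_map (0,0)); last by rewrite size_map in Ej2; lia.
    rewrite Ej nth_last (PP_last m Bv).
    rewrite /P Pe /= /f /= rev_ins sizeLi //; try lia.
    rewrite subnn -(RL 0) //; last lia.
    rewrite add0n.
    have -> : Bv + 3 = h.-1 by lia.
    have := adjI h.-1 0 ltac:(lia) isT; rewrite /f /=.
    by have -> : (h.-1).+1 = m`! %/ 2 by rewrite /h; lia.
  rewrite !nth_cat.
  have -> : (j < size H) = false by lia.
  have -> : (j.+1 < size H) = false by lia.
  rewrite !(nth_map [::]); try (rewrite sH; lia).
  rewrite subSn //; apply: adj_rev; apply: Hadj; rewrite sH; lia.
- move=> i Hi.
  have E2 : m.+1`! %/ 2 = size H by rewrite sH factS; lia.
  rewrite E2 in Hi *.
  rewrite nth_cat ltnNge leq_addl /= addnK nth_cat Hi.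
  by rewrite (nth_map [::]).
Qed.

End Main.

Theorem theorem9 (n : nat) :
  n %% 4 = 1 -> 5 <= n ->
  (exists L, reverse_gray_code n.-1 L /\ propertyP n.-1 L) ->
  exists L, reverse_gray_code n L.
Proof.
move=> H4 H5 [L [HR HP]].
have [En|Hn] : n = 5 \/ 9 <= n by lia.
  subst n; exfalso.
  case: HP => _ E1 _ _ _; case: HR => S _ A _ _.
  have e : (5.-1)`! %/ 2 - 4 = 8 by [].
  rewrite e in E1.
  have : is_perm_word 4 (nth [::] L 8) by apply: (allP A); apply: mem_nth; rewrite S.
  by rewrite E1.
have Hm : 8 <= n.-1 by lia.
have Hmo : ~~ odd n.-1 by lia.
have -> : n = n.-1.+1 by lia.
exact: (main_exists _ _ HR HP Hm Hmo).
Qed.
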